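(* Let $H=(V,E)$ be a hypergraph on $k\ge2$ vertices and let $d\ge1$ be an integer. Then there exists a set $F\subseteq E$ of at most $kd$ hyperedges such that the hypergraph $H'=(V,E\setminus F)$ satisfies: for every integer $\alpha\ge1$, the number of distinct sets $\delta_{H'}(S)$, over $S\subseteq V$, with $|\delta_{H'}(S)|\le\alpha d$ is at most $(2k)^{2\alpha}$.
   Context: For a hypergraph $H=(V,E)$ and $S\subseteq V$, $\delta_H(S)$ is the set of hyperedges $e\in E$ that are contained in neither $S$ nor $V\setminus S$. Two cuts $S_1,S_2$ cutting exactly the same set of hyperedges are counted once. *)

(* Defs.v *)
From mathcomp Require Import all_boot.
Set Implicit Arguments. Unset Strict Implicit. Unset Printing Implicit Defensive.

Definition hcut (V : finType) (E : {set {set V}}) (S : {set V}) : {set {set V}} :=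
  [set e in E | ~~ (e \subset S) && ~~ (e \subset ~: S)].

Definition small_cuts (V : finType) (E : {set {set V}}) (c : nat) :
    {set {set {set V}}} :=
  [set hcut E S | S in [pred S : {set V} | #|hcut E S| <= c]].

(* Main.v *)
Require Import Defs.
From mathcomp Require Import all_boot.
From mathcomp Require Import zify.
Set Implicit Arguments. Unset Strict Implicit. Unset Printing Implicit Defensive.

Definition adj (V : finType) (A : {set {set V}}) : rel V :=
  fun x y => [exists e in A, (x \in e) && (y \in e)].
Definition conn (V : finType) (A : {set {set V}}) : rel V := connect (adj A).
Definition cls (V : finType) (A : {set {set V}}) (x : V) : {set V} :=
  [set y | conn A x y].
Definition comp (V : finType) (A : {set {set V}}) : nat :=
  #|[set cls A x | x in [set: V]]|.

Lemma adj_sym (V : finType) (A : {set {set V}}) : symmetric (adj A).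
Proof.
move=> x y; apply/existsP/existsP => -[e /andP[eA /andP[xe ye]]];
  exists e; by rewrite eA xe ye.
Qed.

Lemma conn_sym (V : finType) (A : {set {set V}}) x y : conn A x y = conn A y x.
Proof. exact: (sym_connect_sym (adj_sym A)). Qed.

Lemma conn_trans (V : finType) (A : {set {set V}}) x y z :
  conn A x y -> conn A y z -> conn A x z.
Proof. exact: connect_trans. Qed.

Lemma conn_refl (V : finType) (A : {set {set V}}) x : conn A x x.
Proof. exact: connect0. Qed.

Lemma conn_edge (V : finType) (A : {set {set V}}) e x y :
  e \in A -> x \in e -> y \in e -> conn A x y.
Proof. by move=> eA xe ye; apply: connect1; apply/existsP; exists e; rewrite eA xe ye. Qed.

Lemma cls_eq (V : finType) (A : {set {set V}}) x y : conn A x y -> cls A x = cls A y.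
Proof.
move=> h; apply/setP => z; rewrite !inE; apply/idP/idP => h2.
  by apply: conn_trans h2; rewrite conn_sym.
exact: conn_trans h h2.
Qed.

Lemma conn_mono (V : finType) (A B : {set {set V}}) x y :
  A \subset B -> conn A x y -> conn B x y.
Proof.
move=> sAB; apply: connect_sub => u v /existsP[e /andP[eA /andP[ue ve]]].
exact: conn_edge (subsetP sAB _ eA) ue ve.
Qed.

Definition lift_cls (V : finType) (B : {set {set V}}) (X : {set V}) : {set V} :=
  [set y | [exists x in X, conn B x y]].

Lemma lift_clsE (V : finType) (A B : {set {set V}}) x :
  (forall u v, conn A u v -> conn B u v) -> lift_cls B (cls A x) = cls B x.
Proof.
move=> h; apply/setP => y; rewrite !inE; apply/existsP/idP.
  by case=> z /andP[]; rewrite inE => /h hxz hzy; apply: conn_trans hxz hzy.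
by move=> hxy; exists x; rewrite inE conn_refl hxy.
Qed.

Lemma comp_imset (V : finType) (A B : {set {set V}}) :
  (forall u v, conn A u v -> conn B u v) ->
  [set cls B x | x in [set: V]] = lift_cls B @: [set cls A x | x in [set: V]].
Proof.
move=> h; rewrite -imset_comp; apply: eq_imset => x /=; by rewrite lift_clsE.
Qed.

Lemma comp_le (V : finType) (A B : {set {set V}}) :
  (forall u v, conn A u v -> conn B u v) -> comp B <= comp A.
Proof. by move=> h; rewrite /comp (comp_imset h) leq_imset_card. Qed.

Lemma comp_eq (V : finType) (A B : {set {set V}}) :
  (forall u v, conn A u v -> conn B u v) -> comp B = comp A ->
  forall u v, conn B u v -> conn A u v.
Proof.
move=> h; rewrite /comp (comp_imset h) => /eqP /imset_injP inj u v huv.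
have : cls A u = cls A v.
  apply: inj; try by apply: imset_f; rewrite inE.
  by rewrite !lift_clsE // (cls_eq huv).
move=> e; have : v \in cls A v by rewrite inE conn_refl.
by rewrite -e inE.
Qed.

Lemma comp_mono (V : finType) (A B : {set {set V}}) :
  A \subset B -> comp B <= comp A.
Proof. by move=> s; apply: comp_le => u v; apply: conn_mono. Qed.

Lemma comp_leV (V : finType) (A : {set {set V}}) : comp A <= #|V|.
Proof. by rewrite /comp (leq_trans (leq_imset_card _ _)) // cardsT. Qed.
Definition Mset (V : finType) (G C : {set {set V}}) : {set {set V}} :=
  [set e in G | comp (C :|: [set e]) < comp C].

Definition Qprop (V : finType) (d : nat) (G : {set {set V}}) : bool :=
  [forall C : {set {set V}}, (C \subset G) ==> (d * (comp C - comp G) <= #|Mset G C|)].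

Lemma comp_removeM (V : finType) (G C : {set {set V}}) :
  C \subset G -> comp (G :\: Mset G C) = comp C.
Proof.
move=> sCG.
have sCG' : C \subset G :\: Mset G C.
  apply/subsetP => e eC; rewrite !inE (subsetP sCG _ eC) andbT.
  rewrite /=; suff -> : C :|: [set e] = C by rewrite ltnn.
  by apply/setUidPl; rewrite sub1set.
apply/eqP; rewrite eqn_leq comp_mono //=.
apply: comp_le; apply: connect_sub => u v /existsP[e /andP[eG' /andP[ue ve]]].
move: eG'; rewrite !inE => /andP[hn eG]; rewrite eG /= in hn.
move/negbTE: hn => eM.
have sub : C \subset C :|: [set e] by apply: subsetUl.
have ceq : comp (C :|: [set e]) = comp C.
  by apply/eqP; rewrite eqn_leq comp_mono // leqNgt eM.
apply: (comp_eq (fun a b => conn_mono (x:=a) (y:=b) sub) ceq).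
by apply: (conn_edge (e := e)) => //; rewrite !inE eqxx orbT.
Qed.

Lemma construct (V : finType) (d : nat) : forall n (G : {set {set V}}),
  #|V| - comp G <= n ->
  exists F : {set {set V}},
    [/\ F \subset G, Qprop d (G :\: F) & #|F| <= d * (comp (G :\: F) - comp G)].
Proof.
elim=> [|n IH] G hn.
  case QG: (Qprop d G).
    by exists set0; rewrite sub0set setD0 QG cards0.
  move/negbT: QG => /forallPn[C]; rewrite negb_imply => /andP[sCG].
  rewrite -ltnNge => hlt.
  have : comp G < comp C.
    rewrite ltnNge; apply/negP => h. by move: hlt; rewrite (eqP (_ : comp C - comp G == 0)) ?muln0 // subn_eq0.
  have := comp_leV G; have := comp_leV C; lia.
case QG: (Qprop d G).
  by exists set0; rewrite sub0set setD0 QG cards0.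
move/negbT: QG => /forallPn[C]; rewrite negb_imply => /andP[sCG].
rewrite -ltnNge => hlt.
have hCG : comp G < comp C.
  rewrite ltnNge; apply/negP => h.
  by move: hlt; rewrite (eqP (_ : comp C - comp G == 0)) ?muln0 // subn_eq0.
set G' := G :\: Mset G C.
have cG' : comp G' = comp C by apply: comp_removeM.
have hn' : #|V| - comp G' <= n.
  have := comp_leV C; lia.
have [F' [sF' QF' cF']] := IH G' hn'.
exists (Mset G C :|: F'); split.
- rewrite subUset; apply/andP; split; first by apply/subsetP => e; rewrite inE => /andP[].
  by apply: (subset_trans sF'); apply: subsetDl.
- by rewrite -setDDl.
- rewrite -setDDl -/G'.
  have h1 : comp G' <= comp (G' :\: F') by apply: comp_mono; apply: subsetDl.
  apply: (leq_trans (leq_card_setU _ _)).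
  move: cF' hlt h1; rewrite cG' => cF' hlt h1.
  rewrite !mulnBr in cF' hlt *.
  have : d * comp C <= d * comp (G' :\: F') by rewrite leq_mul2l h1 orbT.
  have : d * comp G <= d * comp C by rewrite leq_mul2l ltnW ?orbT.
  lia.
Qed.
Definition Dset (V : finType) (G : {set {set V}}) (c : nat) (C : {set {set V}}) :=
  [set D in small_cuts G c | [disjoint D & C]].

Lemma small_cutsP (V : finType) (G : {set {set V}}) c D :
  D \in small_cuts G c -> exists2 S, D = hcut G S & #|hcut G S| <= c.
Proof. by case/imsetP => S; rewrite inE => hS ->; exists S. Qed.

Lemma closed_S (V : finType) (G C : {set {set V}}) (S : {set V}) x y :
  C \subset G -> [disjoint hcut G S & C] -> conn C x y -> (x \in S) = (y \in S).
Proof.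
move=> sCG dis /connectP[p pth ->]; elim: p x pth => [//|z p IH] x /= /andP[axz pth].
rewrite -(IH z pth).
case/existsP: axz => e /andP[eC /andP[xe ze]].
have : e \notin hcut G S by rewrite (disjointFl dis eC).
rewrite inE (subsetP sCG _ eC) /= negb_and !negbK => /orP[] /subsetP h.
  by rewrite (h _ xe) (h _ ze).
by have := h _ xe; have := h _ ze; rewrite !inE => /negbTE -> /negbTE ->.
Qed.

Definition rep (V : finType) (G : {set {set V}}) (x : V) : V :=
  odflt x [pick y in cls G x].

Lemma rep_conn (V : finType) (G : {set {set V}}) x : conn G x (rep G x).
Proof.
rewrite /rep; case: pickP => [y|] /=; last by rewrite conn_refl.
by rewrite inE.
Qed.

Lemma rep_eq (V : finType) (G : {set {set V}}) x y : conn G x y -> rep G x = rep G y.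
Proof.
move=> h; rewrite /rep (cls_eq h); case: pickP => [//|h2].
by have := h2 y; rewrite inE conn_refl.
Qed.

Lemma rep_idem (V : finType) (G : {set {set V}}) x : rep G (rep G x) = rep G x.
Proof. by apply/esym/rep_eq/rep_conn. Qed.

Lemma subset_on (V : finType) (e A B : {set V}) :
  (forall x, x \in e -> (x \in A) = (x \in B)) -> (e \subset A) = (e \subset B).
Proof.
move=> h; apply/subsetP/subsetP => h2 x xe; first by rewrite -h ?h2.
by rewrite h ?h2.
Qed.

Lemma hcut_flip (V : finType) (G : {set {set V}}) (S : {set V}) :
  hcut G [set x | (x \in S) != (rep G x \in S)] = hcut G S.
Proof.
apply/setP => e; rewrite !inE; case eG: (e \in G) => //=.
case: (set_0Vmem e) => [->|[z ze]]; first by rewrite !sub0set.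
have hr : forall x, x \in e -> rep G x = rep G z.
  by move=> x xe; apply: rep_eq; apply: (conn_edge eG xe ze).
set S' := [set x | _ != _].
case b: (rep G z \in S).
- rewrite (@subset_on _ e S' (~: S)); last by move=> x xe; rewrite !inE hr // b; by case: (x \in S).
  rewrite (@subset_on _ e (~: S') S); last by move=> x xe; rewrite !inE hr // b; by case: (x \in S).
  by rewrite andbC.
- rewrite (@subset_on _ e S' S); last by move=> x xe; rewrite !inE hr // b; by case: (x \in S).
  by rewrite (@subset_on _ e (~: S') (~: S)); last by move=> x xe; rewrite !inE hr // b; by case: (x \in S).
Qed.

Lemma base_bound (V : finType) (G C : {set {set V}}) c :
  C \subset G -> #|Dset G c C| <= 2 ^ (comp C - comp G).
Proof.
move=> sCG.
set PC := [set cls C x | x in [set: V]].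
set R := [set cls C (rep G x) | x in [set: V]].
set Fr := PC :\: R.
have sRP : R \subset PC.
  by apply/subsetP => X /imsetP[x _ ->]; apply: imset_f; rewrite inE.
have cR : comp G <= #|R|.
  have hmono : forall u v, conn C u v -> conn G u v by move=> u v; apply: conn_mono.
  rewrite /comp; have -> : [set cls G x | x in [set: V]] = lift_cls G @: R.
    rewrite -imset_comp; apply: eq_imset => x /=.
    by rewrite lift_clsE // -(cls_eq (rep_conn G x)).
  by rewrite leq_imset_card.
have cFr : #|Fr| <= comp C - comp G.
  rewrite /Fr cardsD (setIidPr sRP) [comp C]/comp -/PC; lia.
apply: (@leq_trans #|powerset Fr|); last by rewrite card_powerset leq_pexp2l.
apply: (@leq_trans #|(fun Y => hcut G (cover Y)) @: powerset Fr|); last exact: leq_imset_card.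
apply: subset_leq_card; apply/subsetP => D; rewrite inE => /andP[/small_cutsP[S -> _] dis].
set S' := [set x | (x \in S) != (rep G x \in S)].
have clos : forall x y, conn C x y -> (x \in S') = (y \in S').
  move=> x y hxy; rewrite !inE (closed_S sCG dis hxy).
  by rewrite (rep_eq (conn_mono sCG hxy)).
apply/imsetP; exists [set X in Fr | X \subset S'].
  by rewrite inE; apply/subsetP => X; rewrite inE => /andP[].
rewrite -hcut_flip -/S'; congr hcut.
apply/setP => x; rewrite /cover; apply/idP/idP; last first.
  by case/bigcupP => X; rewrite inE => /andP[_ /subsetP h] /h.
move=> xS; apply/bigcupP; exists (cls C x); last by rewrite inE conn_refl.
rewrite inE; apply/andP; split.
  rewrite inE; apply/andP; split; last by apply: imset_f; rewrite inE.
  apply/negP => /imsetP[z _ hz].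
  have : rep G z \in cls C x by rewrite hz inE conn_refl.
  rewrite inE => /clos; rewrite xS inE rep_idem eqxx => h.
  by [].
by apply/subsetP => y; rewrite inE => /clos <-.
Qed.
Lemma sum_notin (T : finType) (A : {pred T}) (P : pred T) :
  \sum_(x in A) (P x : nat) = #|[pred x in A | P x]|.
Proof. by rewrite -sum1_card big_mkcondr /=; apply: eq_bigr => x _; case: (P x). Qed.

Lemma double_count (V : finType) (G C : {set {set V}}) c :
  #|Dset G c C| * (#|Mset G C| - c) <=
  \sum_(e in Mset G C) #|Dset G c (C :|: [set e])|.
Proof.
apply: (@leq_trans (\sum_(e in Mset G C) \sum_(D in Dset G c C) ((e \notin D) : nat))); last first.
  apply: leq_sum => e _; rewrite sum_notin; apply: subset_leq_card.
  apply/subsetP => D; rewrite !inE => /andP[/andP[Dsm dis] eD]; rewrite Dsm /=.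
  rewrite disjoints_subset; apply/subsetP => x xD; rewrite !inE negb_or.
  rewrite (disjointFr dis xD) /=; apply/negP => /eqP xe.
  by move: eD; rewrite -xe xD.
rewrite exchange_big /= -sum_nat_const; apply: leq_sum => D.
rewrite inE => /andP[/small_cutsP[S -> hc] _].
rewrite sum_notin.
have -> : #|[pred x in Mset G C | x \notin hcut G S]| = #|Mset G C :\: hcut G S|.
  by apply: eq_card => x; rewrite !inE andbC.
rewrite cardsD; apply: leq_sub2l.
exact: leq_trans (subset_leq_card (subsetIr (Mset G C) (hcut G S))) hc.
Qed.
Definition Bnd (a j : nat) := 2 ^ a * 'C(maxn j a, a).

Lemma Bnd_mono a i j : i <= j -> Bnd a i <= Bnd a j.
Proof.
move=> h; rewrite /Bnd leq_mul2l leq_bin2l ?orbT //.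
by rewrite geq_max leq_maxr (leq_trans h) ?leq_maxl.
Qed.

Lemma Bnd_ge a j : 2 ^ a <= Bnd a j.
Proof. by rewrite /Bnd -{1}(muln1 (2 ^ a)) leq_mul2l bin_gt0 leq_maxr orbT. Qed.

Lemma aux_ineq m X A : X <= m -> A <= X -> m * (X - A) <= X * (m - A).
Proof.
move=> h1 h2.
have [t ->] : exists t, m = X + t by exists (m - X); lia.
have [s ->] : exists s, X = A + s by exists (X - A); lia.
rewrite -addnA !addKn; nia.
Qed.

Lemma arith N m Bp d j a : N * (m - a * d) <= m * Bp -> d * j <= m -> a < j -> 0 < d ->
  N * (j - a) <= j * Bp.
Proof.
move=> h1 h2 h3 h4.
have hpos : 0 < m - a * d by nia.
have : N * (d * j - a * d) * (m - a * d) <= d * j * Bp * (m - a * d).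
  have e1 : N * (d * j - a * d) * (m - a * d) = N * (m - a * d) * (d * j - a * d) by rewrite mulnAC.
  rewrite e1; apply: (@leq_trans (m * Bp * (d * j - a * d))).
    by rewrite leq_mul2r h1 orbT.
  rewrite mulnAC [d * j * Bp * _]mulnAC leq_mul2r; apply/orP; right.
  by apply: aux_ineq => //; nia.
rewrite leq_pmul2r // => h.
have : N * (j - a) * d <= j * Bp * d by nia.
by rewrite leq_pmul2r.
Qed.

Lemma count_main (V : finType) (G : {set {set V}}) (d a : nat) :
  Qprop d G -> 0 < d -> forall n (C : {set {set V}}), C \subset G -> comp C - comp G <= n ->
  #|Dset G (a * d) C| <= Bnd a (comp C - comp G).
Proof.
move=> QG d0; elim=> [|n IH] C sCG hn.
  have : comp C - comp G <= a by lia.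
  move=> h; apply: (leq_trans (base_bound _ sCG)).
  exact: leq_trans (leq_pexp2l _ h) (Bnd_ge _ _).
set j := comp C - comp G in hn *.
case: (leqP j a) => hja.
  apply: (leq_trans (base_bound _ sCG)).
  exact: leq_trans (leq_pexp2l _ hja) (Bnd_ge _ _).
have hM : d * j <= #|Mset G C| by have := forallP QG C; rewrite sCG.
have hE : forall e, e \in Mset G C ->
    #|Dset G (a * d) (C :|: [set e])| <= Bnd a j.-1.
  move=> e; rewrite inE => /andP[eG hlt].
  have sCe : C :|: [set e] \subset G by rewrite subUset sCG sub1set eG.
  apply: (leq_trans (IH _ sCe _)); first by lia.
  by apply: Bnd_mono; lia.
have hsum : \sum_(e in Mset G C) #|Dset G (a * d) (C :|: [set e])| <=
            #|Mset G C| * Bnd a j.-1.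
  rewrite -sum_nat_const; exact: leq_sum.
have key := arith (leq_trans (double_count G C (a * d)) hsum) hM hja d0.
move: key; rewrite /Bnd.
have -> : maxn j.-1 a = j.-1 by lia.
have -> : maxn j a = j by lia.
rewrite mulnCA mul_bin_down mulnCA mulnC leq_pmul2l //; lia.
Qed.
Lemma ffact_le_exp n m : n ^_ m <= n ^ m.
Proof.
elim: m => [|m IH]; first by rewrite ffactn0 expn0.
by rewrite ffactnSr expnS mulnC leq_mul ?leq_subr.
Qed.

Lemma Bnd_final a j k : j <= k -> 0 < k -> Bnd a j <= (2 * k) ^ (2 * a).
Proof.
move=> hjk k0; apply: (leq_trans (Bnd_mono a hjk)); rewrite /Bnd.
apply: (@leq_trans ((2 * k) ^ a)); last by rewrite leq_pexp2l ?muln_gt0 // leq_pmull.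
rewrite expnMn leq_mul2l; apply/orP; right.
case: (leqP a k) => h.
    apply: (leq_trans _ (ffact_le_exp k a)).
  by rewrite -bin_ffact leq_pmulr ?fact_gt0.
by rewrite binn expn_gt0 k0.
Qed.

Theorem theorem1p3 (V : finType) (E : {set {set V}}) (k d : nat) :
  #|V| = k -> 2 <= k -> 1 <= d ->
  exists F : {set {set V}},
    [/\ F \subset E, #|F| <= k * d &
        forall alpha : nat, 1 <= alpha ->
          #|small_cuts (E :\: F) (alpha * d)| <= (2 * k) ^ (2 * alpha)].
Proof.
move=> hk k2 d1.
have [F [sFE QF cF]] := construct d (leq_subr (comp E) #|V|).
exists F; split => //.
  apply: (leq_trans cF); rewrite [k * d]mulnC leq_mul2l; apply/orP; right.
  by rewrite -hk (leq_trans (leq_subr _ _)) // comp_leV.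
move=> alpha _.
have := count_main alpha QF d1 (sub0set (E :\: F)) (leqnn _).
have -> : Dset (E :\: F) (alpha * d) set0 = small_cuts (E :\: F) (alpha * d).
  apply/setP => D; rewrite inE.
  by rewrite disjoints_subset setC0 subsetT andbT.
move=> h; apply: (leq_trans h); apply: Bnd_final; last by lia.
by rewrite -hk (leq_trans (leq_subr _ _)) // comp_leV.
Qed.
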